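(* Let $\langle x_n\rangle$ be a cofinally Bourbaki quasi-Cauchy sequence of distinct terms in a metric space $\langle X,d\rangle$. Then there exists a pairwise disjoint family $\{M_j: j\in\mathbb{N}\}$ of infinite subsets of $\mathbb{N}$ such that for every $j\in\mathbb{N}$ and all $i,\ell\in M_j$, the points $x_i$ and $x_\ell$ can be joined by a $\frac1j$-chain.
   Context: For $\varepsilon>0$, an $\varepsilon$-chain joining $x,y\in X$ is a finite sequence $x=u_0,u_1,\dots,u_n=y$ in $X$ with $d(u_{i-1},u_i)<\varepsilon$ for all $i$. A sequence $\langle x_n\rangle$ in $X$ is cofinally Bourbaki quasi-Cauchy if for every $\varepsilon>0$ there is an infinite set $N_\varepsilon\subseteq\mathbb{N}$ such that for all $j,k\in N_\varepsilon$, $x_j$ and $x_k$ can be joined by an $\varepsilon$-chain. *)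

(* Defs.v *)
From Stdlib Require Import Reals.
Open Scope R_scope.

Record is_metric (X : Type) (d : X -> X -> R) : Prop := {
  metric_nonneg : forall x y, 0 <= d x y;
  metric_zero_iff : forall x y, d x y = 0 <-> x = y;
  metric_sym : forall x y, d x y = d y x;
  metric_triangle : forall x y z, d x z <= d x y + d y z
}.

Definition eps_chain {X : Type} (d : X -> X -> R) (eps : R) (x y : X) : Prop :=
  exists (n : nat) (u : nat -> X),
    u 0%nat = x /\ u n = y /\
    (forall i : nat, (i < n)%nat -> d (u i) (u (S i)) < eps).

Definition infinite_nat (A : nat -> Prop) : Prop :=
  forall m : nat, exists n : nat, (m <= n)%nat /\ A n.

Definition cofinally_BQC {X : Type} (d : X -> X -> R) (x : nat -> X) : Prop :=
  forall eps : R, 0 < eps ->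
    exists N : nat -> Prop, infinite_nat N /\
      (forall j k : nat, N j -> N k -> eps_chain d eps (x j) (x k)).

(* Main.v *)
Require Import Defs.
From Stdlib Require Import Reals.
From Stdlib Require Import Lia Lra Arith ClassicalEpsilon.
Open Scope R_scope.

Lemma build_seq (G : nat -> nat -> Prop) (f : nat -> nat)
  (HG : forall j m, exists n, (m <= n)%nat /\ G j n) :
  exists a : nat -> nat, (forall p q, a p = a q -> p = q) /\
    (forall p, (p <= a p)%nat) /\ (forall p, G (f p) (a p)).
Proof.
  destruct (choice (fun jm : nat * nat => fun n => (snd jm <= n)%nat /\ G (fst jm) n))
    as [pk Hpk].
  { intros [j m]; apply HG. }
  pose (a := fix a (p : nat) {struct p} : nat := match p with
                      | O => pk (f O, O)
                      | S q => pk (f (S q), S (a q)) end).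
  assert (Hs : forall p, (a p < a (S p))%nat).
  { intro p. simpl. destruct (Hpk (f (S p), S (a p))) as [H _]. simpl in H. lia. }
  assert (Hmono : forall p q, (p < q)%nat -> (a p < a q)%nat).
  { intros p q Hpq. induction q. lia.
    destruct (Nat.eq_dec p q). subst; apply Hs.
    specialize (Hs q). assert (a p < a q)%nat by (apply IHq; lia). lia. }
  exists a. split; [|split].
  - intros p q E. destruct (Nat.lt_trichotomy p q) as [h|[h|h]]; auto.
    apply Hmono in h; lia. apply Hmono in h; lia.
  - induction p. lia. specialize (Hs p). lia.
  - destruct p; simpl.
    + exact (proj2 (Hpk (f O, O))).
    + exact (proj2 (Hpk (f (S p), S (a p)))).
Qed.

Theorem mainTheorem3 (X : Type) (d : X -> X -> R) (Hd : is_metric X d)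
  (x : nat -> X)
  (Hdistinct : forall n m : nat, x n = x m -> n = m)
  (Hx : cofinally_BQC d x) :
  exists M : nat -> (nat -> Prop),
    (forall j k : nat, (1 <= j)%nat -> (1 <= k)%nat -> j <> k ->
       forall n : nat, ~ (M j n /\ M k n)) /\
    (forall j : nat, (1 <= j)%nat -> infinite_nat (M j)) /\
    (forall j : nat, (1 <= j)%nat ->
       forall i l : nat, M j i -> M j l ->
         eps_chain d (1 / INR j) (x i) (x l)).
Proof.
  destruct (choice (fun j (N : nat -> Prop) => infinite_nat N /\
     ((1 <= j)%nat -> forall a b, N a -> N b -> eps_chain d (1 / INR j) (x a) (x b))))
    as [G HG].
  { intro j. destruct (le_lt_dec 1 j) as [h|h].
    - destruct (Hx (1 / INR j)) as [N [H1 H2]].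
      { apply Rdiv_lt_0_compat. lra. apply lt_0_INR. lia. }
      exists N; auto.
    - exists (fun _ => True). split. intro m; exists m; auto. intros; lia. }
  pose (f := fun p => (p - Nat.sqrt p * Nat.sqrt p)%nat).
  assert (Hf : forall j m, exists p, (m <= p)%nat /\ f p = j).
  { intros j m. exists ((j + m) * (j + m) + j)%nat. split. nia.
    unfold f. rewrite (Nat.sqrt_unique _ (j + m)). lia. split. lia. nia. }
  destruct (build_seq G f) as [a [Ha1 [Ha2 Ha3]]].
  { intros j m. apply (proj1 (HG j)). }
  exists (fun j n => exists p, f p = j /\ a p = n). split; [|split].
  - intros j k _ _ Hjk n [[p [Hp1 Hp2]] [q [Hq1 Hq2]]].
    subst. assert (p = q) by (apply Ha1; congruence). subst. auto.
  - intros j _ m. destruct (Hf j m) as [p [Hp1 Hp2]].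
    exists (a p). split. specialize (Ha2 p). lia. exists p; auto.
  - intros j hj i l [p [Hp1 Hp2]] [q [Hq1 Hq2]]. subst.
    apply (proj2 (HG (f p))); auto.
    rewrite <- Hq1. apply Ha3.
Qed.
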